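(* Let $\Sigma$ be an alphabet and let $\mathcal P=(n,\Gamma,I,M,P,p_0,l)$ be a $\mathbb B\langle\Sigma\cup\{\epsilon\}\rangle$-$\omega$-pushdown automaton over $(\mathbb B\langle\langle\Sigma^*\rangle\rangle,\mathbb B\langle\langle\Sigma^\omega\rangle\rangle)$, and let $G_l$ be the mixed context-free grammar constructed from $\mathcal P$. Then $$L(G_l)=\|\mathcal P\|,$$ where $\|\mathcal P\|=I(M^* )_{p_0,\epsilon}P+I(M^{\omega,l})_{p_0}$ is identified with the set $\operatorname{supp}(I(M^* )_{p_0,\epsilon}P)\cup\operatorname{supp}(I(M^{\omega,l})_{p_0})\subseteq\Sigma^*\cup\Sigma^\omega$.
   Context: $\mathbb B=(\{0,1\},\vee,\wedge,{}^*,0,1)$ with $0^*=1^*=1$; $(\mathbb B\langle\langle\Sigma^*\rangle\rangle,\mathbb B\langle\langle\Sigma^\omega\rangle\rangle)$ (power series over finite/infinite words, identified with languages) is a complete semiring-semimodule pair (infinite sums = unions, infinite products = concatenations). $(s,a)$ is the coefficient of $a$ in $s$; $\mathbb B\langle\Sigma\cup\{\epsilon\}\rangle$ is the set of series with support in $\Sigma\cup\{\epsilon\}$. A pushdown transition matrix $M$ ($\Gamma^*\times\Gamma^*$ matrix with $n\times n$ blocks over $\mathbb B\langle\Sigma\cup\{\epsilon\}\rangle$) satisfies (i) for each $p\in\Gamma$ only finitely many blocks $M_{p,\pi}$ are nonzero, and (ii) $M_{\pi_1,\pi_2}=M_{p,\pi}$ if $\pi_1=p\pi'$, $\pi_2=\pi\pi'$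 for some $p\in\Gamma$, $\pi,\pi'\in\Gamma^*$, and $0$ otherwise. The automaton has states $1,\dots,n$, pushdown alphabet $\Gamma$, such an $M$, $I\in(\mathbb B\langle\Sigma\cup\{\epsilon\}\rangle)^{1\times n}$, $P\in(\mathbb B\langle\Sigma\cup\{\epsilon\}\rangle)^{n\times 1}$, $p_0\in\Gamma$, $l\in\{0,\dots,n\}$. $M^*=\sum_{m\ge0}M^m$ with blocks $(M^* )_{\pi,\pi'}$; with $P_l=\{(j_1,j_2,\dots)\in\{1,\dots,n\}^\omega\mid j_t\le l\text{ for infinitely many }t\}$, $((M^{\omega,l})_\pi)_i=\sum_{\pi_1,\pi_2,\ldots\in\Gamma^*}\sum_{(j_1,j_2,\ldots)\in P_l}(M_{\pi,\pi_1})_{i,j_1}(M_{\pi_1,\pi_2})_{j_1,j_2}\cdots$. The mixed context-free grammar $G_l=(X,Z,\Sigma,P_X,P_Z,x_0,z_0,l)$ has variables $X=\{x_0\}\cup\{[i,p,j]\mid 1\le i,j\le n,\ p\in\Gamma\}$, $Z=\{z_0\}\cup\{[i,p]\mid1\le i\le n,\ p\in\Gamma\}$, and productions: $P_X$: $x_0\to a_1[m_1,p_0,m_2]a_2$ whenever $(I_{m_1},a_1)\ne0$, $(P_{m_2},a_2)\ne0$, $a_1,a_2\in\Sigma\cup\{\epsilon\}$; and $[i,p,j]\to a[m_1,p_1,m_2][m_2,p_2,m_3]\cdots[m_k,p_k,j]$ whenever $k\ge0$, $p_1,\dots,p_k\in\Gamma$, $1\le m_1,\dots,m_k\le n$, $a\in\Sigma\cup\{\epsilon\}$,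 $((M_{p,p_1\dots p_k})_{i,m_1},a)\ne0$ (for $k=0$: $[i,p,j]\to a$ with $((M_{p,\epsilon})_{i,j},a)\ne0$). $P_Z$: $z_0\to a[m,p_0]$ whenever $(I_m,a)\ne0$, $a\in\Sigma\cup\{\epsilon\}$; and $[i,p]\to a[m_1,p_1,m_2]\cdots[m_{j-1},p_{j-1},m_j][m_j,p_j]$ whenever $k\ge1$, $1\le j\le k$, $p_1,\dots,p_k\in\Gamma$, $1\le m_1,\dots,m_j\le n$, $a\in\Sigma\cup\{\epsilon\}$, $((M_{p,p_1\dots p_k})_{i,m_1},a)\ne0$. An infinite derivation of $w\in\Sigma^\omega$ is a sequence $z_0\Rightarrow\alpha_0[i_0,q_0]\Rightarrow_L^*w_0[i_0,q_0]\Rightarrow w_0\alpha_1[i_1,q_1]\Rightarrow_L^*w_0w_1[i_1,q_1]\Rightarrow\cdots$ where $z_0\to\alpha_0[i_0,q_0]$ and $[i_m,q_m]\to\alpha_{m+1}[i_{m+1},q_{m+1}]$ are in $P_Z$, each $\alpha_m\Rightarrow_L^*w_m\in\Sigma^*$ is a finite leftmost derivation with $P_X$, and $w=w_0w_1\cdots$. It is a derivation $z_0\Rightarrow_L^{\omega,l}w$ if, with $i_m^1,\dots,i_m^{t_m}$ the first components of the triple variables rewritten (in order) in $\alpha_m\Rightarrow_L^*w_m$, the sequence $i_0,i_1^1,\dots,i_1^{t_1},i_1,i_2^1,\dots,i_2^{t_2},i_2,\dots$ lies in $P_l$. $L(G_l)=\{w\in\Sigma^*\mid x_0\Rightarrow_L^*w\}\cup\{w\in\Sigma^\omega\mid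 z_0\Rightarrow_L^{\omega,l}w\}$. *)

(* Defs.v *)
From mathcomp Require Import all_boot.
Set Implicit Arguments. Unset Strict Implicit. Unset Printing Implicit Defensive.

(* Sigma^{Sigma-or-epsilon} letters are [option Sigma] (None = epsilon).
   Finite words are [seq Sigma]; infinite words are [nat -> Sigma]. *)

Definition oword (S : Type) (a : option S) : seq S :=
  if a is Some x then [:: x] else [::].

Definition cat_upto (T : Type) (u : nat -> seq T) (m : nat) : seq T :=
  flatten [seq u i | i <- iota 0 m].

(* [omega_concat u w]: the infinite concatenation u 0 u 1 u 2 ... is the
   infinite word w (every finite partial concatenation is a prefix of w,
   and the partial concatenations have unbounded length). *)
Definition omega_concat (T : Type) (u : nat -> seq T) (w : nat -> T) : Prop :=
  (forall m, cat_upto u m = mkseq w (size (cat_upto u m))) /\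
  (forall N, exists m, N <= size (cat_upto u m)).

Inductive word (S : Type) := FinW of seq S | InfW of nat -> S.
Arguments FinW {S}. Arguments InfW {S}.

(* States 1..n are represented by 'I_n (state k+1 <-> ordinal k).
   Entries of B<Sigma u {eps}> are boolean predicates on option Sigma.
   pM p pi = the block M_{p,pi}. *)
Record pda (Sigma Gamma : finType) := Pda {
  nst : nat;
  pI : 'I_nst -> option Sigma -> bool;
  pM : Gamma -> seq Gamma -> 'I_nst -> 'I_nst -> option Sigma -> bool;
  pP : 'I_nst -> option Sigma -> bool;
  p0 : Gamma;
  lacc : nat }.
Arguments nst {Sigma Gamma}. Arguments pI {Sigma Gamma}. Arguments pM {Sigma Gamma}.
Arguments pP {Sigma Gamma}. Arguments p0 {Sigma Gamma}. Arguments lacc {Sigma Gamma}.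

Definition pda_wf (Sigma Gamma : finType) (A : pda Sigma Gamma) : Prop :=
  (forall p : Gamma, exists s : seq (seq Gamma),
      forall pi i j a, pM A p pi i j a -> pi \in s) /\
  lacc A <= nst A.

Section Automaton.
Variables (Sigma Gamma : finType) (A : pda Sigma Gamma).
Local Notation n := (nst A).

Definition Mfull (pi1 pi2 : seq Gamma) (i j : 'I_n) (a : option Sigma) : Prop :=
  exists p pi pi', pi1 = p :: pi' /\ pi2 = pi ++ pi' /\ pM A p pi i j a.

Definition beh_fin (w : seq Sigma) : Prop :=
  exists (k : nat) (st : nat -> seq Gamma) (q : nat -> 'I_n)
         (b : nat -> option Sigma) (a1 a2 : option Sigma),
    pI A (q 0) a1 /\ st 0 = [:: p0 A] /\ st k = [::] /\ pP A (q k) a2 /\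
    (forall t, t < k -> Mfull (st t) (st t.+1) (q t) (q t.+1) (b t)) /\
    w = oword a1 ++ flatten [seq oword (b t) | t <- iota 0 k] ++ oword a2.

(* supp (I (M^{omega,l})_{p0}): q 0 = i, q 1 = j_1, q 2 = j_2, ...;
   P_l condition: j_t <= l (1-based) i.e. (q t : nat) < l, infinitely often. *)
Definition beh_inf (w : nat -> Sigma) : Prop :=
  exists (a : option Sigma) (st : nat -> seq Gamma) (q : nat -> 'I_n)
         (b : nat -> option Sigma),
    pI A (q 0) a /\ st 0 = [:: p0 A] /\
    (forall t, Mfull (st t) (st t.+1) (q t) (q t.+1) (b t)) /\
    (forall N, exists t, N < t /\ q t < lacc A) /\
    omega_concat (fun t => if t is t'.+1 then oword (b t') else oword a) w.

Definition behaviour (w : word Sigma) : Prop :=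
  match w with FinW u => beh_fin u | InfW v => beh_inf v end.
End Automaton.

Inductive xvar (n : nat) (Gamma : Type) :=
  | X0 : xvar n Gamma
  | XT : 'I_n -> Gamma -> 'I_n -> xvar n Gamma.
Inductive zvar (n : nat) (Gamma : Type) :=
  | Z0 : zvar n Gamma
  | ZT : 'I_n -> Gamma -> zvar n Gamma.
Inductive sym (Sigma : Type) (n : nat) (Gamma : Type) :=
  | Ter : Sigma -> sym Sigma n Gamma
  | NT : xvar n Gamma -> sym Sigma n Gamma.
Arguments X0 {n Gamma}. Arguments XT {n Gamma}.
Arguments Z0 {n Gamma}. Arguments ZT {n Gamma}.
Arguments Ter {Sigma n Gamma}. Arguments NT {Sigma n Gamma}.

Fixpoint chainX (n : nat) (Gamma : Type) (ms : seq 'I_n) (ps : seq Gamma)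
  (j : 'I_n) : seq (xvar n Gamma) :=
  match ms, ps with
  | m :: ms', p :: ps' => XT m p (head j ms') :: chainX ms' ps' j
  | _, _ => [::]
  end.

Definition firstc (n : nat) (Gamma : Type) (x : xvar n Gamma) : seq 'I_n :=
  match x with X0 => [::] | XT i _ _ => [:: i] end.

Section Grammar.
Variables (Sigma Gamma : finType) (A : pda Sigma Gamma).
Local Notation n := (nst A).
Local Notation symb := (sym Sigma n Gamma).

Definition oterm (a : option Sigma) : seq symb := map Ter (oword a).

Definition prodX (x : xvar n Gamma) (beta : seq symb) : Prop :=
  match x with
  | X0 => exists (m1 m2 : 'I_n) a1 a2,
      pI A m1 a1 /\ pP A m2 a2 /\
      beta = oterm a1 ++ NT (XT m1 (p0 A) m2) :: oterm a2
  | XT i p j => exists a (ms : seq 'I_n) (ps : seq Gamma),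
      size ms = size ps /\ pM A p ps i (head j ms) a /\
      beta = oterm a ++ map NT (chainX ms ps j)
  end.

Definition prodZ (z : zvar n Gamma) (beta : seq symb) (z' : zvar n Gamma) : Prop :=
  match z with
  | Z0 => exists (m : 'I_n) a, pI A m a /\ beta = oterm a /\ z' = ZT m (p0 A)
  | ZT i p => exists a (ms1 : seq 'I_n) (ps1 : seq Gamma) (mj : 'I_n) (pj : Gamma)
                     (ps2 : seq Gamma),
      size ms1 = size ps1 /\ pM A p (ps1 ++ pj :: ps2) i (head mj ms1) a /\
      beta = oterm a ++ map NT (chainX ms1 ps1 mj) /\ z' = ZT mj pj
  end.

Definition lstep (alpha beta : seq symb) (r : seq 'I_n) : Prop :=
  exists (u : seq Sigma) (x : xvar n Gamma) (gamma delta : seq symb),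
    alpha = map Ter u ++ NT x :: gamma /\ prodX x delta /\
    beta = map Ter u ++ delta ++ gamma /\ r = firstc x.

Inductive lderiv : seq symb -> seq symb -> seq 'I_n -> Prop :=
  | lderiv_refl alpha : lderiv alpha alpha [::]
  | lderiv_step alpha beta gamma r s :
      lstep alpha beta r -> lderiv beta gamma s -> lderiv alpha gamma (r ++ s).

Definition gram_fin (w : seq Sigma) : Prop :=
  exists s, lderiv [:: NT X0] (map Ter w) s.

Definition gram_inf (w : nat -> Sigma) : Prop :=
  exists (alpha : nat -> seq symb) (iz : nat -> 'I_n) (qz : nat -> Gamma)
         (wd : nat -> seq Sigma) (s : nat -> seq 'I_n) (jseq : nat -> 'I_n),
    prodZ Z0 (alpha 0) (ZT (iz 0) (qz 0)) /\
    (forall m, prodZ (ZT (iz m) (qz m)) (alpha m.+1) (ZT (iz m.+1) (qz m.+1))) /\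
    (forall m, lderiv (alpha m) (map Ter (wd m)) (s m)) /\
    omega_concat wd w /\
    omega_concat (fun m => if m is m'.+1 then s m ++ [:: iz m] else [:: iz 0]) jseq /\
    (forall N, exists t, N <= t /\ jseq t < lacc A).

Definition gram_lang (w : word Sigma) : Prop :=
  match w with FinW u => gram_fin u | InfW v => gram_inf v end.
End Grammar.

(* Main.v *)
Require Import Defs.
From mathcomp Require Import all_boot zify.
From Stdlib Require Import Classical IndefiniteDescription.
Set Implicit Arguments. Unset Strict Implicit. Unset Printing Implicit Defensive.

Lemma map_iota_shift (T : Type) (F G : nat -> T) :
  (forall t, G t.+1 = F t) -> forall a k, map G (iota a.+1 k) = map F (iota a k).
Proof. move=> H a k; elim: k a => [|k IH] a //=; by rewrite H IH. Qed.

Lemma cat_upto_add (T : Type) (u : nat -> seq T) a d :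
  cat_upto u (a + d) = cat_upto u a ++ flatten [seq u i | i <- iota a d].
Proof. by rewrite /cat_upto iotaD map_cat flatten_cat. Qed.

Lemma cat_upto_S (T : Type) (u : nat -> seq T) m :
  cat_upto u m.+1 = cat_upto u m ++ u m.
Proof. by rewrite -addn1 cat_upto_add /= cats0. Qed.

Lemma cat_upto_prefix (T : Type) (u : nat -> seq T) m m' :
  m <= m' -> exists L, cat_upto u m' = cat_upto u m ++ L.
Proof. move=> H; rewrite -(subnKC H) cat_upto_add; by eexists. Qed.

Lemma cat_upto_shift (T : Type) (x : seq T) (u : nat -> seq T) m :
  cat_upto (fun t => if t is t'.+1 then u t' else x) m.+1 = x ++ cat_upto u m.
Proof.
rewrite /cat_upto -[m.+1]add1n iotaD /= (map_iota_shift (F:=u)) //.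
Qed.

Lemma oc_prefix (T : Type) (u : nat -> seq T) w k L L' :
  omega_concat u w -> cat_upto u k = L ++ L' -> L = mkseq w (size L).
Proof.
move=> [H1 _] E; have := H1 k; rewrite E => E2.
have : take (size L) (L ++ L') = take (size L) (mkseq w (size (L ++ L'))) by rewrite -E2.
rewrite take_size_cat // => EL; rewrite {1}EL.
have Hs : size L <= size (L ++ L') by rewrite size_cat leq_addr.
apply: (@eq_from_nth _ (w 0)); first by rewrite size_mkseq size_takel ?size_mkseq.
move=> i Hi; rewrite size_takel ?size_mkseq // in Hi. rewrite nth_take //. rewrite !nth_mkseq //; exact: leq_trans Hi Hs.
Qed.

Lemma oc_nth (T : Type) (u : nat -> seq T) w k L L' d t :
  omega_concat u w -> cat_upto u k = L ++ L' -> t < size L -> nth d L t = w t.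
Proof. move=> H E Ht; rewrite (oc_prefix H E) nth_mkseq //. Qed.

Lemma oc_unique (T : Type) (u : nat -> seq T) w1 w2 t :
  omega_concat u w1 -> omega_concat u w2 -> w1 t = w2 t.
Proof.
move=> H1 H2; have [m Hm] := H1.2 t.+1.
rewrite -(oc_nth (w1 t) H1 (esym (cats0 _)) Hm).
exact: (oc_nth (w1 t) H2 (esym (cats0 _)) Hm).
Qed.

Lemma oc_transfer (T : Type) (u v : nat -> seq T) w :
  omega_concat u w ->
  (forall m, exists k L', cat_upto v m ++ L' = cat_upto u k) ->
  (forall k, exists m L', cat_upto u k ++ L' = cat_upto v m) ->
  omega_concat v w.
Proof.
move=> H Hvu Huv; split.
  move=> m; have [k [L' E]] := Hvu m; exact: (oc_prefix H (esym E)).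
move=> N; have [k Hk] := H.2 N; have [m [L' E]] := Huv k.
exists m; rewrite -E size_cat; lia.
Qed.

Lemma oc_map (T U : Type) (h : T -> U) (u : nat -> seq T) w :
  omega_concat u w -> omega_concat (fun m => map h (u m)) (fun t => h (w t)).
Proof.
have E : forall m, cat_upto (fun m => map h (u m)) m = map h (cat_upto u m).
  by move=> m; rewrite /cat_upto map_flatten -map_comp.
move=> [H1 H2]; split.
  move=> m; rewrite E size_map H1 size_mkseq /mkseq -map_comp //.
move=> N; have [m Hm] := H2 N; exists m; by rewrite E size_map.
Qed.

Lemma size_cat_upto (T : Type) (f : nat -> seq T) m :
  (forall m, 0 < size (f m)) -> m <= size (cat_upto f m).
Proof.
move=> Hf; elim: m => [|m IH] //; rewrite cat_upto_S size_cat; have := Hf m; lia.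
Qed.

Lemma glue (X : Type) (d : X) (f : nat -> seq X) :
  (forall m, 0 < size (f m)) ->
  omega_concat f (fun t => nth d (cat_upto f t.+1) t).
Proof.
move=> Hf; split; last first.
  move=> N; exists N; exact: size_cat_upto.
move=> m; apply: (@eq_from_nth _ d); first by rewrite size_mkseq.
move=> i Hi; rewrite nth_mkseq //.
have [L1 E1] := cat_upto_prefix f (leq_maxl m i.+1).
have [L2 E2] := cat_upto_prefix f (leq_maxr m i.+1).
have Hi2 : i < size (cat_upto f i.+1) by have := size_cat_upto i.+1 Hf.
have := congr1 (fun s => nth d s i) (etrans (esym E1) E2).
by rewrite /= !nth_cat Hi Hi2.
Qed.

Lemma ex_min (P : nat -> Prop) : (exists k, P k) -> exists k, P k /\ forall k', P k' -> k <= k'.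
Proof.
move=> [k Hk]; apply: NNPP => Hn.
suff : forall k j, j <= k -> ~ P j by move/(_ k k (leqnn k)).
elim=> [|k' IH] j Hj Pj.
  apply: Hn; exists j; split => // k2 _; lia.
rewrite leq_eqVlt in Hj; case/orP: Hj => [/eqP Ej | Hj]; last exact: (IH j Hj Pj).
subst j; apply: Hn; exists k'.+1; split; first by [].
move=> k2 Pk2; case: (leqP k'.+1 k2) => // Hlt; exfalso; exact: (IH k2 Hlt Pk2).
Qed.

Lemma fchoice (X Y : Type) (P : X -> Y -> Prop) :
  (forall x, exists y, P x y) -> exists f : X -> Y, forall x, P x (f x).
Proof.
move=> H; exists (fun x => proj1_sig (constructive_indefinite_description _ (H x))).
move=> x; exact: (proj2_sig (constructive_indefinite_description _ (H x))).
Qed.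

Lemma cat_upto_ext (T : Type) (u v : nat -> seq T) m :
  (forall t, u t = v t) -> cat_upto u m = cat_upto v m.
Proof. move=> H; rewrite /cat_upto; congr flatten; apply: eq_map => t; exact: H. Qed.

Lemma cat_upto_flatten (T : Type) (W : nat -> seq (seq T)) m :
  cat_upto (fun m => flatten (W m)) m = flatten (cat_upto W m).
Proof.
elim: m => [|m IH] //; by rewrite !cat_upto_S IH flatten_cat.
Qed.

Lemma cat_upto_mkseq (T : Type) (u : nat -> seq T) m : flatten (mkseq u m) = cat_upto u m.
Proof. by []. Qed.

Section Main.
Variables (Sigma Gamma : finType) (A : pda Sigma Gamma).
Local Notation n := (nst A).
Local Notation symb := (sym Sigma n Gamma).
Local Notation MF := (@Mfull Sigma Gamma A).
Local Notation lderiv := (@lderiv Sigma Gamma A).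
Local Notation lstep := (@lstep Sigma Gamma A).

Inductive run : 'I_n -> seq Gamma -> 'I_n -> seq Gamma -> seq Sigma -> seq 'I_n -> Prop :=
| run0 i st : run i st i st [::] [::]
| runS i st i1 st1 a j st2 v s :
    MF st st1 i i1 a -> run i1 st1 j st2 v s -> run i st j st2 (oword a ++ v) (i :: s).

Lemma run_inv i st j st' v s : run i st j st' v s ->
  (i = j /\ st = st' /\ v = [::] /\ s = [::]) \/
  (exists i1 st1 a v1 s1, MF st st1 i i1 a /\ run i1 st1 j st' v1 s1 /\
     v = oword a ++ v1 /\ s = i :: s1).
Proof. case=> [*|*]; [left | right]; first by []. do 5 eexists; eauto. Qed.

Lemma map_Ter_inj (u v : seq Sigma) : map (@Ter Sigma n Gamma) u = map Ter v -> u = v.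
Proof. apply: inj_map => x y; by case. Qed.

Lemma split_NT (u u' : seq Sigma) (x x' : xvar n Gamma) (g g' : seq symb) :
  map Ter u ++ NT x :: g = map Ter u' ++ NT x' :: g' -> [/\ u = u', x = x' & g = g'].
Proof.
elim: u u' => [|a u IH] [|a' u'] /= E; try by case: E.
by case: E => -> /IH [-> -> ->].
Qed.

Lemma no_NT (w u : seq Sigma) (x : xvar n Gamma) (g : seq symb) :
  map Ter w <> map Ter u ++ NT x :: g.
Proof. elim: u w => [|a u IH] [|b w] //= [_]; exact: IH. Qed.

Lemma chainX_cat (ms1 ms2 : seq 'I_n) (ps1 ps2 : seq Gamma) j :
  size ms1 = size ps1 ->
  chainX ms1 ps1 (head j ms2) ++ chainX ms2 ps2 j = chainX (ms1 ++ ms2) (ps1 ++ ps2) j.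
Proof.
elim: ms1 ps1 => [|m ms1 IH] [|p ps1] //= [Hs]; rewrite IH //.
by case: ms1 {IH} Hs.
Qed.

Lemma chainX_nil (ms : seq 'I_n) (ps : seq Gamma) j :
  size ms = size ps -> chainX ms ps j = [::] -> ms = [::] /\ ps = [::].
Proof. by case: ms ps => [|m ms] [|p ps]. Qed.

Lemma lstep_ctx alpha beta r u g :
  lstep alpha beta r -> lstep (map Ter u ++ alpha ++ g) (map Ter u ++ beta ++ g) r.
Proof.
move=> [u' [x [gamma [delta [Ea [Hp [Eb Er]]]]]]].
exists (u ++ u'), x, (gamma ++ g), delta; subst; split; first by rewrite map_cat -!catA.
by split; [|split]; rewrite // map_cat -!catA.
Qed.

Lemma lderiv_ctx alpha beta s u g :
  lderiv alpha beta s -> lderiv (map Ter u ++ alpha ++ g) (map Ter u ++ beta ++ g) s.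
Proof.
elim=> [a|a b c r s' H _ IH]; first exact: lderiv_refl.
apply: lderiv_step IH; exact: lstep_ctx.
Qed.

Lemma lderiv_trans a b c s1 s2 : lderiv a b s1 -> lderiv b c s2 -> lderiv a c (s1 ++ s2).
Proof.
elim=> [//|a' b' c' r s H _ IH] H2; rewrite -catA; apply: lderiv_step H _; exact: IH.
Qed.

Lemma lderiv_cat a b w1 w2 s1 s2 :
  lderiv a (map Ter w1) s1 -> lderiv b (map Ter w2) s2 ->
  lderiv (a ++ b) (map Ter (w1 ++ w2)) (s1 ++ s2).
Proof.
move=> H1 H2; apply: (@lderiv_trans _ (map Ter w1 ++ b)).
  by have := lderiv_ctx [::] b H1.
have := lderiv_ctx w1 [::] H2; by rewrite !cats0 map_cat.
Qed.

Lemma lstep_one x delta : prodX x delta -> lstep [:: NT x] delta (firstc x).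
Proof. move=> H; exists [::], x, [::], delta; by rewrite cats0. Qed.

Lemma Mfull_lift x y i j a R : MF x y i j a -> MF (x ++ R) (y ++ R) i j a.
Proof.
move=> [p [pi [pi' [-> [-> H]]]]]; exists p, pi, (pi' ++ R); by rewrite catA.
Qed.

Lemma run_lift i st j st' v s R : run i st j st' v s -> run i (st ++ R) j (st' ++ R) v s.
Proof.
elim=> [*|*]; first exact: run0.
apply: runS; eauto; exact: Mfull_lift.
Qed.

Lemma run_split pi i st j st' v s : run i st j st' v s -> st' = [::] ->
  forall x, st = x ++ pi -> exists k v1 v2 s1 s2,
    run i x k [::] v1 s1 /\ run k pi j [::] v2 s2 /\ v = v1 ++ v2 /\ s = s1 ++ s2.
Proof.
move=> H E x; case: x => [|p x'] Ex.
  rewrite /= in Ex; subst st st'; exists i, [::], v, [::], s; split; first exact: run0. by [].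
elim: H p x' E Ex => [i0 st0|i0 st0 i1 st1 a j0 st2 v0 s0 HM Hr IH] p x' E Ex.
  by subst.
move: HM => [p1 [pi0 [pi' [E1 [E2 HM]]]]].
rewrite Ex in E1; case: E1 => Ep Epi; subst p1 pi'.
have E3 : st1 = (pi0 ++ x') ++ pi by rewrite E2 catA.
case E4: (pi0 ++ x') => [|p2 x2].
  exists i1, (oword a), v0, [:: i0], s0; split.
    rewrite -[oword a]cats0; apply: runS; last exact: run0.
    exists p, pi0, x'; rewrite -E4; by split.
  split; last by []. rewrite E3 E4 E in Hr; exact: Hr.
rewrite E4 in E3; have [k [v1 [v2 [s1 [s2 [Hr1 [Hr2 [Ev Es]]]]]]]] := IH p2 x2 E E3.
exists k, (oword a ++ v1), v2, (i0 :: s1), s2; split.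
  apply: runS Hr1; exists p, pi0, x'; by rewrite -E4.
by rewrite Ev Es catA.
Qed.

Lemma head_cat (j : 'I_n) ms0 ms' : head j (ms0 ++ ms') = head (head j ms') ms0.
Proof. by case: ms0. Qed.

Lemma G2R alpha beta s : lderiv alpha beta s ->
  forall u ms ps j z w, size ms = size ps ->
  alpha = map Ter u ++ map NT (chainX ms ps j) ++ map Ter z -> beta = map Ter w ->
  exists v, w = u ++ v ++ z /\ run (head j ms) ps j [::] v s.
Proof.
elim=> [al | al be ga r s' Hst Hd IH] u ms ps j z w Hs Ea Eb.
  case Ec: (chainX ms ps j) => [|x rest].
    have [Em Ep] := chainX_nil Hs Ec; subst ms ps.
    rewrite Ec /= -map_cat in Ea; rewrite Ea in Eb.
    exists [::]; split; first by rewrite (map_Ter_inj Eb).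
    exact: run0.
  rewrite Ec /= in Ea; rewrite Ea in Eb; by case: (no_NT (esym Eb)).
move: Hst => [u' [x [gamma [delta [Ea' [Hp [Eb' Er]]]]]]].
case: ms ps Hs Ea => [|m1 ms'] [|p1 ps'] //= Hs Ea.
  by rewrite -map_cat Ea' in Ea; case: (no_NT (esym Ea)).
case: Hs => Hs.
rewrite Ea' /= in Ea; have [Eu Ex Eg] := split_NT Ea; subst u' x gamma.
move: Hp => [a [ms0 [ps0 [Hs0 [HM Ed]]]]].
have := IH (u ++ oword a) (ms0 ++ ms') (ps0 ++ ps') j z w.
case.
- by rewrite !size_cat Hs0 Hs.
- rewrite Eb' Ed /oterm -chainX_cat // !map_cat -!catA //.
- exact: Eb.
move=> v' [Ew Hr]; exists (oword a ++ v'); split; first by rewrite Ew -!catA.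
rewrite Er /=; apply: runS Hr; exists p1, ps0, ps'; rewrite head_cat; by split.
Qed.


Lemma R2G N : forall i ps j v s, size s < N -> run i ps j [::] v s ->
  exists ms, [/\ size ms = size ps, head j ms = i &
                 lderiv (map NT (chainX ms ps j)) (map Ter v) s].
Proof.
elim: N => [//|N IH] i ps j v s HN Hr.
case: ps Hr => [|p pi] Hr.
  case: (run_inv Hr) => [[-> [_ [-> ->]]] | [i1 [st1 [a [v1 [s1 [HM _]]]]]]].
    exists [::]; split => //; exact: lderiv_refl.
  by move: HM => [? [? [? [? _]]]].
have [k [v1 [v2 [s1 [s2 [Hr1 [Hr2 [Ev Es]]]]]]]] :=
  run_split Hr (erefl _) (x := [:: p]) (erefl _).
case: (run_inv Hr1) => [[_ [? _]] //| [i1 [st1 [a [v1' [s1' [HM [Hr1' [Ev1 Es1]]]]]]]]].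
move: HM => [p' [pi0 [pi' [[Ep Epi] [Est HM]]]]]; subst p' pi' st1.
rewrite cats0 in Hr1'.
have Hsz : size s = (size s1').+1 + size s2 by rewrite Es Es1 size_cat.
have [ms0 [Hs0 Hh0 Hd0]] := IH _ _ _ _ _ (ltac:(lia) : size s1' < N) Hr1'.
have [ms2 [Hs2 Hh2 Hd2]] := IH _ _ _ _ _ (ltac:(lia) : size s2 < N) Hr2.
exists (i :: ms2); split; [by rewrite /= Hs2 | by [] |].
rewrite /= Hh2 Ev Es Ev1 Es1 -[NT _ :: _]cat1s -cat1s.
apply: lderiv_cat => //.
apply: (lderiv_step (r := [:: i]) (s := s1')).
  apply: (lstep_one (x := XT i p k)); exists a, ms0, pi0; split => //; by rewrite Hh0.
have := lderiv_ctx (oword a) [::] Hd0; by rewrite !cats0 map_cat.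
Qed.

Lemma idx2run (st : nat -> seq Gamma) (q : nat -> 'I_n) (b : nat -> option Sigma) k a :
  (forall t, t < k -> MF (st (a + t)) (st (a + t).+1) (q (a + t)) (q (a + t).+1) (b (a + t))) ->
  run (q a) (st a) (q (a + k)) (st (a + k))
      (flatten [seq oword (b t) | t <- iota a k]) [seq q t | t <- iota a k].
Proof.
elim: k a => [|k IH] a H; first by rewrite addn0; exact: run0.
rewrite /=; apply: (runS (i1 := q a.+1) (st1 := st a.+1)).
  by have := H 0 isT; rewrite addn0.
rewrite -addSnnS; apply: IH => t Ht; rewrite addSnnS; apply: H; lia.
Qed.

Lemma run2idx i st j st' v s : run i st j st' v s ->
  exists k (stf : nat -> seq Gamma) (qf : nat -> 'I_n) (bf : nat -> option Sigma),
    [/\ stf 0 = st, qf 0 = i, stf k = st', qf k = j &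
        [/\ (forall t, t < k -> MF (stf t) (stf t.+1) (qf t) (qf t.+1) (bf t)),
        v = flatten [seq oword (bf t) | t <- iota 0 k] &
        s = [seq qf t | t <- iota 0 k]]].
Proof.
elim=> [i0 st0 | i0 st0 i1 st1 a j0 st2 v0 s0 HM _ [k [stf [qf [bf [E1 E2 E3 E4 [H5 E6 E7]]]]]]].
  exists 0, (fun _ => st0), (fun _ => i0), (fun _ => None); by split.
exists k.+1, (fun t => if t is t'.+1 then stf t' else st0),
  (fun t => if t is t'.+1 then qf t' else i0), (fun t => if t is t'.+1 then bf t' else a).
split => //; split.
- case=> [_|t Ht] /=; first by rewrite E1 E2.
  exact: H5.
- rewrite /= E6 (map_iota_shift (F := fun t => oword (bf t))) //.
- rewrite /= E7 (map_iota_shift (F := qf)) //.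
Qed.

Lemma fin_equiv w : gram_fin A w <-> beh_fin A w.
Proof.
split.
- move=> [s Hd].
  have Hd' := Hd; inversion Hd' as [al E1 E2 | al be ga r s' Hst Hd2 E1 E2 E3].
    by case: w {Hd Hd'} E2 => [|? ?].
  move: Hst => [u [x [gamma [delta [Ea [Hp [Eb Er]]]]]]].
  case: u Ea Eb => [|? ?] //= [Ex Eg] Eb; subst x gamma.
  move: Hp => [m1 [m2 [a1 [a2 [HI [HP Ed]]]]]].
  have := G2R Hd2 (u := oword a1) (ms := [:: m1]) (ps := [:: p0 A]) (j := m2) (z := oword a2) (w := w).
  case => //.
    by rewrite Eb Ed /oterm /= cats0.
  move=> v [Ew Hr].
  have [k [stf [qf [bf [F1 F2 F3 F4 [F5 F6 F7]]]]]] := run2idx Hr.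
  exists k, stf, qf, bf, a1, a2; split => //; first by rewrite F2.
  split => //; split => //; split; first by rewrite F4.
  by split; [|rewrite Ew F6].
- move=> [k [st [q [b [a1 [a2 [HI [E0 [Ek [HP [Hst Ew]]]]]]]]]]].
  have Hr := idx2run (a := 0) Hst; rewrite E0 Ek /= in Hr.
  have [ms [Hs Hh Hd]] := R2G (ltnSn _) Hr.
  case: ms Hs Hh Hd => [|m [|? ?]] //= _ Hh Hd.
  subst m; exists ([::] ++ [seq q t | t <- iota 0 k]).
  rewrite add0n in Hd.
  have H1 : lstep [:: NT X0] (oterm A a1 ++ NT (XT (q 0) (p0 A) (q k)) :: oterm A a2) [::].
    apply: (lstep_one (x := X0)).
    exists (q 0), (q k), a1, a2; by split.
  have H2 := lderiv_ctx (oword a1) (oterm A a2) Hd.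
  rewrite -map_cat -map_cat -Ew in H2.
  exact: lderiv_step H1 H2.
Qed.

Definition conf := (seq Gamma * 'I_n)%type.
Definition stepT := (conf * option Sigma)%type.
Definition hdc (l : seq stepT) (c : conf) : conf := if l is x :: _ then x.1 else c.
Fixpoint lrun (l : seq stepT) (c : conf) : Prop :=
  match l with
  | [::] => True
  | x :: l' => MF x.1.1 (hdc l' c).1 x.1.2 (hdc l' c).2 x.2 /\ lrun l' c
  end.

Lemma run2list i st j st' v s : run i st j st' v s ->
  exists l, [/\ lrun l (st', j), hdc l (st', j) = (st, i),
     v = flatten [seq oword x.2 | x <- l] & s = [seq x.1.2 | x <- l]].
Proof.
elim=> [i0 st0 | i0 st0 i1 st1 a j0 st2 v0 s0 HM _ [l [H1 H2 H3 H4]]].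
  by exists [::].
subst; exists (((st0, i0), a) :: l); split => //=.
by rewrite H2.
Qed.

Lemma hdc_cat l1 l2 c : hdc (l1 ++ l2) c = hdc l1 (hdc l2 c).
Proof. by case: l1. Qed.

Lemma lrun_cat l1 l2 c c' : lrun l1 c -> lrun l2 c' -> hdc l2 c' = c -> lrun (l1 ++ l2) c'.
Proof.
elim: l1 => [|x l1 IH] //= [H1 H2] H3 H4; split; last exact: IH.
by rewrite hdc_cat H4.
Qed.

Lemma lrun_nth (d : stepT) L c t : lrun L c -> t.+1 < size L ->
  MF (nth d L t).1.1 (nth d L t.+1).1.1 (nth d L t).1.2 (nth d L t.+1).1.2 (nth d L t).2.
Proof.
elim: L t => [|x l IH] [|t] //= [H1 H2] Ht.
  by case: l H1 H2 Ht IH.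
exact: IH.
Qed.

Lemma hdc_nth (d : stepT) l c : 0 < size l -> hdc l c = (nth d l 0).1.
Proof. by case: l. Qed.

Lemma lderiv_ter u beta s : lderiv (map Ter u) beta s -> beta = map Ter u /\ s = [::].
Proof.
move=> H; inversion H as [al E1 E2 | al be ga r s' Hst Hd2 E1 E2 E3]; first by [].
move: Hst => [u' [x [g [d [Ea _]]]]]; by case: (no_NT Ea).
Qed.

Lemma inf_g2b w : gram_inf A w -> beh_inf A w.
Proof.
move=> [alpha [iz [qz [wd [s [jseq [HZ0 [HZ [HD [Hw [Hj Hl]]]]]]]]]]].
move: HZ0 => [m0 [a [HI [Ea0 Ez0]]]]; case: Ez0 => Ei0 Eq0.
have [Ewd0 Es0] : map (@Ter Sigma n Gamma) (wd 0) = map Ter (oword a) /\ s 0 = [::].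
  apply: (lderiv_ter (u := oword a)); have := HD 0; rewrite Ea0; exact.
have {}Ewd0 := map_Ter_inj Ewd0.
have seg : forall m, exists P2, forall R,
    run (iz m) (qz m :: R) (iz m.+1) (qz m.+1 :: P2 ++ R) (wd m.+1) (iz m :: s m.+1).
  move=> m; move: (HZ m) => [a' [ms1 [ps1 [mj [pj [ps2 [Hs [HM [Eal Ez]]]]]]]]].
  case: Ez => Emj Epj.
  have Ea1 : alpha m.+1 = map Ter (oword a') ++ map NT (chainX ms1 ps1 mj) ++ map Ter [::].
    by rewrite Eal cats0.
  have [v [Ew Hr]] := G2R (HD m.+1) Hs Ea1 (erefl _).
  exists ps2 => R; rewrite Ew cats0.
  apply: runS; last first.
    have := run_lift (pj :: ps2 ++ R) Hr; rewrite /= Emj Epj; exact.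
  exists (qz m), (ps1 ++ pj :: ps2), R; split => //; split; first by rewrite -catA.
  by [].
have [P2 HP2] := fchoice seg.
pose Rs := fix Rs m := if m is m'.+1 then P2 m' ++ Rs m' else [::].
pose cf m : conf := (qz m :: Rs m, iz m).
have seg2 : forall m, exists l, [/\ lrun l (cf m.+1), hdc l (cf m.+1) = cf m,
     wd m.+1 = flatten [seq oword x.2 | x <- l] & iz m :: s m.+1 = [seq x.1.2 | x <- l]].
  move=> m; exact: run2list (HP2 m (Rs m)).
have [L HL] := fchoice seg2.
have Lne : forall m, 0 < size (L m).
  move=> m; have [_ _ _ E] := HL m; by rewrite -(size_map (fun x : stepT => x.1.2)) -E.
pose d : stepT := (([::], iz 0), None).
have HG := glue d Lne.
set g := (fun t => nth d (cat_upto L t.+1) t) in HG.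
have cat_lrun : forall M, lrun (cat_upto L M) (cf M) /\ hdc (cat_upto L M) (cf M) = cf 0.
  elim=> [|M [IH1 IH2]] //; rewrite cat_upto_S.
  have [H1 H2 _ _] := HL M; split; first exact: lrun_cat IH1 H1 H2.
  by rewrite hdc_cat H2.
have g0 : (g 0).1 = cf 0.
  have [_ E] := cat_lrun 1.
  have Hs : 0 < size (cat_upto L 1) by have := size_cat_upto 1 Lne.
  by rewrite -E (hdc_nth d _ Hs).
exists a, (fun t => (g t).1.1), (fun t => (g t).1.2), (fun t => (g t).2).
split; first by rewrite g0 /cf /= Ei0.
split; first by rewrite g0 /cf /= Eq0.
split.
  move=> t; have [H _] := cat_lrun t.+2.
  have Hs : t.+1 < size (cat_upto L t.+2) by have := size_cat_upto t.+2 Lne.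
  have := lrun_nth d H Hs.
  rewrite (oc_nth d HG (esym (cats0 _)) Hs).
  by rewrite (oc_nth d HG (esym (cats0 _)) (ltnW Hs)).
pose Q m := [seq x.1.2 | x <- L m].
have HQ : omega_concat Q (fun t => (g t).1.2) := oc_map (fun x : stepT => x.1.2) HG.
pose J := (fun m => if m is m'.+1 then s m ++ [:: iz m] else [:: iz 0]).
have EJ : forall M, cat_upto J M.+1 = cat_upto Q M ++ [:: iz M].
  elim=> [|M IH]; first by [].
  have [_ _ _ E4] := HL M.
  rewrite cat_upto_S IH cat_upto_S -!catA; congr (_ ++ _); by rewrite /Q -E4.
split.
  move=> N; have [t [Ht Hlt]] := Hl N.+1; exists t; split => //.
  have Hs : t < size (cat_upto Q t.+1).
    apply: size_cat_upto => m; rewrite /Q size_map; exact: Lne.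
  rewrite -(oc_nth (iz 0) HQ (esym (cats0 _)) Hs).
  by rewrite (oc_nth (iz 0) Hj (EJ t.+1) Hs).
pose W m := [seq oword x.2 | x <- L m].
have HW : omega_concat W (fun t => oword (g t).2) := oc_map (fun x : stepT => oword x.2) HG.
have Wne : forall m, 0 < size (W m) by move=> m; rewrite /W size_map.
pose bs := (fun t => if t is t'.+1 then oword (g t').2 else oword a).
have KEY : forall m, cat_upto wd m.+1 = cat_upto bs (size (cat_upto W m)).+1.
  move=> m; rewrite (cat_upto_ext (v := fun t => if t is t'.+1 then flatten (W t') else oword a)).
    rewrite cat_upto_shift cat_upto_flatten {1}(proj1 HW m) cat_upto_mkseq.
    by rewrite cat_upto_shift.
  case=> [|t] /=; first by rewrite Ewd0.
  by have [_ _ E3 _] := HL t.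
apply: (oc_transfer (v := bs) Hw).
  move=> m; exists m.+1.
  have Hm : m <= (size (cat_upto W m)).+1 by apply: leqW; exact: size_cat_upto.
  have [L' E] := cat_upto_prefix bs Hm.
  by exists L'; rewrite KEY E.
case=> [|k]; first by exists 0, [::].
by exists (size (cat_upto W k)).+1, [::]; rewrite cats0 KEY.
Qed.

Lemma catIs_ (T : Type) (y z S : seq T) : y ++ S = z ++ S -> y = z.
Proof.
move=> E; have Hs : size y = size z by have := congr1 size E; rewrite !size_cat; lia.
have := congr1 (take (size y)) E; by rewrite take_size_cat // take_size_cat.
Qed.

Lemma Mstrip x y S i j a : MF (x ++ S) (y ++ S) i j a -> x <> [::] -> MF x y i j a.
Proof.
case: x => [|p x'] // [p1 [pi [pi' [E1 [E2 HM]]]]] _.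
case: E1 => Ep Epi; subst p1 pi'.
exists p, pi, x'; split => //; split => //.
apply: (@catIs_ _ _ _ S); by rewrite E2 catA.
Qed.

Lemma cat_split (x S pi R : seq Gamma) : x ++ S = pi ++ R -> size R < size S ->
  exists S', S = S' ++ R /\ pi = x ++ S'.
Proof.
move=> E Hlt.
have Hsz : size x + size S = size pi + size R by have := congr1 size E; rewrite !size_cat.
have E1 := congr1 (drop (size pi)) E; rewrite (drop_size_cat R (erefl (size pi))) drop_cat in E1.
have E2 := congr1 (take (size pi)) E; rewrite (take_size_cat R (erefl (size pi))) take_cat in E2.
have Hn : (size pi < size x) = false by apply/negbTE; rewrite -leqNgt; lia.
rewrite Hn in E1 E2.
exists (take (size pi - size x) S); split; last by rewrite E2.
by rewrite -{1}(cat_take_drop (size pi - size x) S) E1.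
Qed.

Lemma ex_next (h : nat -> nat) t : exists t1, [/\ t < t1,
    forall t', t < t' -> h t1 <= h t' & forall t', t < t' -> t' < t1 -> h t1 < h t'].
Proof.
have [hm [[t0 [Ht0 Eh]] Hmin]] := ex_min (P := fun k => exists t', t < t' /\ h t' = k)
  (ex_intro _ (h t.+1) (ex_intro _ t.+1 (conj (ltnSn t) (erefl _)))).
have [t1 [[Ht1 Eh1] Hmin1]] := ex_min (P := fun t' => t < t' /\ h t' = hm)
  (ex_intro _ t0 (conj Ht0 Eh)).
exists t1; split => //.
  move=> t' Ht'; rewrite Eh1; apply: Hmin; by exists t'.
move=> t' Ht' Ht'1; rewrite Eh1.
have : hm <= h t' by apply: Hmin; exists t'.
rewrite leq_eqVlt => /orP [/eqP E|//].
have := Hmin1 t' (conj Ht' (esym E)); lia.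
Qed.

Section Spine.
Variables (st : nat -> seq Gamma) (q : nat -> 'I_n) (b : nat -> option Sigma).
Hypothesis Hst : forall t, MF (st t) (st t.+1) (q t) (q t.+1) (b t).

Lemma st_ne t : 0 < size (st t).
Proof. by have [p [pi [pi' [-> _]]]] := Hst t. Qed.

Lemma suffix_persist S a0 k : (exists x, st a0 = x ++ S) ->
  (forall i, i < k -> size S < size (st (a0 + i))) -> exists x, st (a0 + k) = x ++ S.
Proof.
elim: k => [|k IH] H0 Hk; first by rewrite addn0.
have [x Ex] := IH H0 (fun i Hi => Hk i (ltnW Hi)).
have Hs := Hk k (ltnSn k); rewrite Ex size_cat in Hs.
case: x Ex Hs => [|p x'] Ex Hs; first by rewrite /= ltnn in Hs.
have [p1 [pi [pi' [E1 [E2 _]]]]] := Hst (a0 + k).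
rewrite Ex in E1; case: E1 => _ E1; subst pi'.
exists (pi ++ x'); by rewrite addnS E2 catA.
Qed.

Lemma take_suffix (x S : seq Gamma) : take (size (x ++ S) - size S) (x ++ S) = x.
Proof. by rewrite size_cat addnK take_size_cat. Qed.

End Spine.

Lemma inf_b2g w : beh_inf A w -> gram_inf A w.
Proof.
move=> [a [st [q [b [HI [E0 [Hst [Hl Hw]]]]]]]].
have [nxt Hnxt] := fchoice (ex_next (fun t => size (st t))).
pose T m := iter m nxt 0.
have TS : forall m, T m.+1 = nxt (T m) by [].
have Tlt : forall m, T m < T m.+1 by move=> m; rewrite TS; have [] := Hnxt (T m).
have Tge : forall m, m <= T m.
  elim=> [|m IH] //; have := Tlt m; lia.
have spine : forall m t', T m <= t' -> size (st (T m)) <= size (st t').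
  case=> [|m] t' Ht'; first by rewrite /= E0; exact: st_ne Hst t'.
  rewrite TS; have [H1 H2 _] := Hnxt (T m); apply: H2.
  rewrite TS in Ht'; lia.
have seg : forall m, exists al,
    prodZ (ZT (q (T m)) (head (p0 A) (st (T m)))) al
          (ZT (q (T m.+1)) (head (p0 A) (st (T m.+1)))) /\
    lderiv al (map Ter (flatten [seq oword (b t) | t <- iota (T m) (T m.+1 - T m)]))
              [seq q t | t <- iota (T m).+1 (T m.+1 - (T m).+1)].
  move=> m; set t := T m; set t1 := T m.+1.
  have [Ht1 Hmin Hlt] : [/\ t < t1, forall t', t < t' -> size (st t1) <= size (st t')
      & forall t', t < t' -> t' < t1 -> size (st t1) < size (st t')] by exact: Hnxt.
  have [p [pi [R [Est [Est1 HM]]]]] := Hst t.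
  set S := st t1.
  pose k0 := t1 - t.+1.
  have Et1 : t.+1 + k0 = t1 by rewrite /k0; lia.
  pose S0 := drop (size (st t.+1) - size S) (st t.+1).
  have HS0 : size S0 = size S.
    rewrite size_drop; have := Hmin t.+1 (ltnSn t); rewrite -/S; lia.
  have Hpers : forall k, k <= k0 -> exists x, st (t.+1 + k) = x ++ S0.
    move=> k Hk; apply: (suffix_persist Hst).
      by exists (take (size (st t.+1) - size S) (st t.+1)); rewrite cat_take_drop.
    move=> i Hi; rewrite HS0; apply: Hlt; lia.
  have ES : S0 = S.
    have [x Ex] := Hpers k0 (leqnn _); rewrite Et1 -/S in Ex.
    case: x Ex => [//|y x] Ex.
    have := congr1 size Ex; rewrite size_cat HS0 /=; lia.
  rewrite ES in Hpers.
  pose stf t' := take (size (st t') - size S) (st t').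
  have Estf : forall k, k <= k0 -> st (t.+1 + k) = stf (t.+1 + k) ++ S.
    move=> k Hk; have [x Ex] := Hpers k Hk; by rewrite /stf Ex take_suffix.
  have Hrun := idx2run (st := stf) (q := q) (b := b) (k := k0) (a := t.+1).
  have {Hrun}Hrun : run (q t.+1) (stf t.+1) (q t1) [::]
       (flatten [seq oword (b t) | t <- iota t.+1 k0]) [seq q t | t <- iota t.+1 k0].
    have E1 : stf t1 = [::] by rewrite /stf subnn take0.
    rewrite -E1 -Et1; apply: Hrun => i Hi.
    apply: (@Mstrip _ _ S).
      rewrite -Estf; last lia. rewrite -addnS -Estf; last lia. rewrite addnS; exact: Hst.
    move=> Enil; have := Hlt (t.+1 + i) (ltac:(lia)) (ltac:(lia)).
    by rewrite Estf ?Enil //; [rewrite ltnn | lia].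
  have [ms [Hms Hh Hd]] := R2G (ltnSn _) Hrun.
  have Eq1 : stf t.+1 ++ S = pi ++ R by rewrite -Est1 -(addn0 t.+1) -Estf.
  have HRS : size R < size S.
    have := spine m t1 (ltnW Ht1); rewrite -/t -/S Est /=; lia.
  have [S' [ES' Epi]] := cat_split Eq1 HRS.
  case: S' ES' Epi => [|pj ps2] ES' Epi; first by rewrite ES' ltnn in HRS.
  exists (oterm A (b t) ++ map NT (chainX ms (stf t.+1) (q t1))); split.
    exists (b t), ms, (stf t.+1), (q t1), pj, ps2; split => //; split.
      have -> : head (p0 A) (st t) = p by rewrite Est.
      rewrite Hh -Epi; exact: HM.
    by split => //; rewrite ES'.
  have -> : t1 - t = k0.+1 by rewrite /k0; lia.
  have -> : t1 - t.+1 = k0 by [].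
  have := lderiv_ctx (oword (b t)) [::] Hd; by rewrite !cats0 -map_cat.
have [alph Halph] := fchoice seg.
pose bs := (fun t => if t is t'.+1 then oword (b t') else oword a).
pose wd := (fun m => if m is m'.+1 then flatten [seq oword (b t) | t <- iota (T m') (T m'.+1 - T m')]
                     else oword a).
pose s := (fun m => if m is m'.+1 then [seq q t | t <- iota (T m').+1 (T m'.+1 - (T m').+1)]
                    else [::]).
pose iz := (fun m => q (T m)).
pose J := (fun m => if m is m'.+1 then s m ++ [:: iz m] else [:: iz 0]).
have KEY : forall m, cat_upto wd m.+1 = cat_upto bs (T m).+1.
  elim=> [|m IH]; first by rewrite /cat_upto /=.
  rewrite cat_upto_S IH.
  have -> : (T m.+1).+1 = (T m).+1 + (T m.+1 - T m) by have := Tlt m; lia.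
  rewrite cat_upto_add (map_iota_shift (F := fun t => oword (b t))) //.
have KEYJ : forall m, cat_upto J m.+1 = mkseq q (T m).+1.
  elim=> [|m IH]; first by [].
  rewrite cat_upto_S IH /J /s /iz.
  have Hd := Tlt m.
  have -> : (T m.+1).+1 = ((T m).+1 + (T m.+1 - (T m).+1)) + 1 by lia.
  rewrite /mkseq !iotaD !map_cat -catA /=.
  have -> : (T m).+1 + (T m.+1 - (T m).+1) = T m.+1 by lia.
  by [].
exists (fun m => if m is m'.+1 then alph m' else oterm A a), iz,
  (fun m => head (p0 A) (st (T m))), wd, s, q.
split.
  exists (q 0), a; split => //; split => //; by rewrite /iz /= E0.
split; first by move=> m; have [] := Halph m.
split.
  case=> [|m]; first exact: lderiv_refl.
  by have [] := Halph m.
split.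
  apply: (oc_transfer (u := bs) Hw).
    case=> [|m]; first by exists 0, [::].
    by exists (T m).+1, [::]; rewrite cats0 KEY.
  move=> k; exists k.+1.
  have Hk : k <= (T k).+1 by have := Tge k; lia.
  have [L' E] := cat_upto_prefix bs Hk.
  by exists L'; rewrite KEY E.
split.
  split.
    case=> [|m]; first by [].
    by rewrite KEYJ size_mkseq.
  move=> N; exists N.+1; rewrite KEYJ size_mkseq; have := Tge N; lia.
move=> N; have [t [Ht Hq]] := Hl N; exists t; split => //; exact: ltnW.
Qed.
End Main.

Theorem corollary15 (Sigma Gamma : finType) (A : pda Sigma Gamma) :
  pda_wf A ->
  forall w : word Sigma, gram_lang A w <-> behaviour A w.
Proof.
move=> _ [u|v] /=; first exact: fin_equiv.
split; [exact: inf_g2b | exact: inf_b2g].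
Qed.
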